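(* Let $G$ be an instance and $b>1$, and let $R$ be the minimal reward placed at $t$ required to motivate the sophisticated agent (with abandonment) with present-bias parameter $b$ to reach $t$ from $s$. Then $R\le b\cdot C_o(s)$.
   Context: An instance is a finite directed acyclic graph $G=(V,E)$ with nonnegative edge costs $c(u,v)$, start node $s$ and target node $t$, where $t$ is the unique node with no outgoing edges; $C_o(u)$ is the minimum cost of a $u$–$t$ path. Sophisticated agent with bias $b$ and reward $R$ at $t$, which may abandon: process nodes in reverse topological order; $t$ is never abandoned and $C_R(t)=0$. For $u\neq t$, among out-edges $(u,v)$ with $v$ not abandoned let $P(u,v)=b\,c(u,v)+C_R(v)$; if none exists or all have $P(u,v)>R$, $u$ is abandoned; otherwise the agent at $u$ moves to $v^*(u)\in\arg\min P(u,v)$ and $C_R(u)=c(u,v^*(u))+C_R(v^*(u))$. The agent is motivated to reach $t$ (the graph is traversable for $R$) iff $s$ is not abandoned. *)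

(* Defs.v *)
From mathcomp Require Import all_boot all_order all_algebra.
Set Implicit Arguments. Unset Strict Implicit. Unset Printing Implicit Defensive.
Import Order.TTheory GRing.Theory Num.Theory.
Local Open Scope ring_scope.

Fixpoint walk_cost {R : numDomainType} {V : Type} (c : V -> V -> R) (u : V)
  (p : seq V) : R :=
  match p with
  | [::] => 0
  | v :: p' => c u v + walk_cost c v p'
  end.

Definition acyclic {V : finType} (E : rel V) : Prop :=
  forall (u : V) (p : seq V), path E u p -> last u p = u -> p = [::].

Definition unique_sink {V : finType} (E : rel V) (t : V) : Prop :=
  forall u : V, (forall v, ~~ E u v) <-> u = t.

Definition nonneg_costs {R : numDomainType} {V : finType} (E : rel V)
  (c : V -> V -> R) : Prop :=
  forall u v, E u v -> 0 <= c u v.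

Definition instance {R : numDomainType} {V : finType} (E : rel V)
  (c : V -> V -> R) (t : V) : Prop :=
  [/\ acyclic E, unique_sink E t & nonneg_costs E c].

Definition is_opt_cost {R : numDomainType} {V : finType} (E : rel V)
  (c : V -> V -> R) (t u : V) (x : R) : Prop :=
  (exists p, [/\ path E u p, last u p = t & walk_cost c u p = x]) /\
  (forall p, path E u p -> last u p = t -> x <= walk_cost c u p).

(* A possible outcome of the sophisticated agent's backward computation with
   bias b and reward r: ab u = true iff u is abandoned, CR u = C_R(u) for
   non-abandoned u. Any tie-breaking choice of v*(u) in the argmin is allowed;
   in a DAG, these equations are exactly the result of processing the nodes
   in reverse topological order with some tie-breaking. *)
Definition soph_run {R : numDomainType} {V : finType} (E : rel V)
  (c : V -> V -> R) (t : V) (b r : R) (ab : V -> bool) (CR : V -> R) : Prop :=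
  ab t = false /\ CR t = 0 /\
  forall u, u != t ->
    let P v := b * c u v + CR v in
    if ab u then
      forall v, E u v -> ~~ ab v -> r < P v
    else
      exists vs, [/\ E u vs, ~~ ab vs, P vs <= r,
        (forall v, E u v -> ~~ ab v -> P vs <= P v) &
        CR u = c u vs + CR vs].

(* The agent is motivated to reach t from s with reward r (whatever the
   tie-breaking): s is not abandoned. *)
Definition motivated {R : numDomainType} {V : finType} (E : rel V)
  (c : V -> V -> R) (s t : V) (b r : R) : Prop :=
  forall ab CR, soph_run E c t b r ab CR -> ab s = false.

(* Main.v *)
Require Import Defs.
From mathcomp Require Import all_boot all_order all_algebra.
Import Order.TTheory GRing.Theory Num.Theory.
Local Open Scope ring_scope.

Lemma key (R : realFieldType) (V : finType) (E : rel V)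
  (c : V -> V -> R) (t : V) (b r : R) ab CR :
  instance E c t -> 1 < b -> soph_run E c t b r ab CR ->
  forall p u, path E u p -> last u p = t -> b * walk_cost c u p <= r ->
  ab u = false /\ CR u <= b * walk_cost c u p.
Proof.
move=> [_ Hsink Hnn] Hb [Hat [HCt Hrun]].
have b0 : 0 < b by apply: lt_trans Hb.
elim=> [|v p IH] u /=.
  move=> _ -> _; by rewrite Hat HCt mulr0.
move=> /andP[Euv Hp] Hl Hr.
have cuv0 := Hnn _ _ Euv.
have Hr' : b * walk_cost c v p <= r.
  apply: le_trans Hr; rewrite ler_pM2l // lerDr //.
have [abv CRv] := IH v Hp Hl Hr'.
have Hut : u != t.
  apply/eqP => Eut; have := (proj2 (Hsink u) Eut v); by rewrite Euv.
have := Hrun u Hut => /=.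
have Pv : b * c u v + CR v <= b * walk_cost c u (v :: p).
  by rewrite /= mulrDr lerD2l.
case: (ab u) => H.
  have := H v Euv; rewrite abv => /(_ isT) Hlt.
  have : r < r by apply: (lt_le_trans Hlt); apply: le_trans Pv Hr.
  by rewrite ltxx.
split => //.
case: H => vs [Evs _ _ Hmin ->].
apply: le_trans Pv.
apply: le_trans (Hmin v Euv _); last by rewrite abv.
rewrite lerD2r.
have := Hnn _ _ Evs => c0.
by rewrite -{1}(mul1r (c u vs)) ler_wpM2r // ltW.
Qed.

Theorem theorem2 (R : realFieldType) (V : finType) (E : rel V)
  (c : V -> V -> R) (s t : V) (b Co_s : R) :
  instance E c t -> 1 < b -> is_opt_cost E c t s Co_s ->
  exists r : R, r <= b * Co_s /\ motivated E c s t b r.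
Proof.
move=> Hi Hb [[p [Hp Hl Hc]] _].
exists (b * Co_s); split => // ab CR Hrun.
have := @key _ _ _ _ _ _ _ _ _ Hi Hb Hrun _ _ Hp Hl; rewrite Hc => /(_ (lexx _)) [] //.
Qed.
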